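(* Suppose $F$ is symmetric ($F(-i)=1-F(i)$ for all $i$), let $R\in(0,1)$, $\beta=F(1/2-R)$, $Q=(q_1+q_2)/2$ and $\sigma=q_H/q_L$. Then $\pi^B=\frac{(1-2Q)\sigma}{1+\sigma}+2Q\beta$, $\Delta_O^B=\frac{\beta Q(\sigma+1)-2Q\sigma+\sigma}{2\beta Q(\sigma+1)-2Q\sigma+\sigma}-\frac{(1-2Q)\sigma}{1+\sigma}-Q$, and the value of the recommendation system is $V(\beta)=\pi^B\Delta_O^B=(1-2Q)\frac{\sigma+Q\left(\beta-\sigma+\sigma^2(1-\beta)\right)}{(\sigma+1)^2}$.
   Context: Setting. Consumer types are $i\in[-1/2,1/2]$, distributed according to a continuous cumulative distribution function $F$ with full support on $[-1/2,1/2]$. A product has a quality vector $(Q_1,Q_2)\in\{0,1\}^2$; a type-$i$ consumer gets payoff $(1/2+i)Q_1+(1/2-i)Q_2$ from it. The versions $(1,1),(1,0),(0,1),(0,0)$ have prior probabilities $q_H,q_1,q_2,q_L$ respectively, all strictly positive and summing to $1$. Given a threshold $R\in(0,1)$, a sender whose type is drawn from $F$ independently of the product gives a buy recommendation $B$ if her payoff from the product is at least $R$ and a don't-buy recommendation $D$ otherwise. Let $\phi_1(R)=1-F(R-1/2)$, $\phi_2(R)=F(1/2-R)$, $\pi^B=q_H+q_1\phi_1(R)+q_2\phi_2(R)$, $\pi^D=1-\pi^B$. Posteriors: $p^B_H=q_H/\pi^B$, $p^B_1=q_1\phi_1(R)/\pi^B$, $p^B_2=q_2\phi_2(R)/\pi^B$;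 $p^D_H=0$, $p^D_1=q_1(1-\phi_1(R))/\pi^D$, $p^D_2=q_2(1-\phi_2(R))/\pi^D$. Let $U_i^r=p_H^r+(1/2+i)p_1^r+(1/2-i)p_2^r$ for $r\in\{B,D\}$ and $U_i^0=q_H+(1/2+i)q_1+(1/2-i)q_2$. The objective effect of the buy recommendation is $\Delta_O^B=p_H^B-q_H+\frac{p_1^B-q_1}{2}+\frac{p_2^B-q_2}{2}$. The value of the recommendation system is $V=\pi^B\int_{-1/2}^{1/2}\max\{U_i^B-U_i^0,0\}\,dF(i)+\pi^D\int_{-1/2}^{1/2}\max\{U_i^D-U_i^0,0\}\,dF(i)$. *)

(* Defs.v *)
From HB Require Import structures.
From mathcomp Require Import all_boot all_order all_algebra.
From mathcomp Require Import all_classical all_reals all_analysis.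
Set Implicit Arguments. Unset Strict Implicit. Unset Printing Implicit Defensive.
Import Order.TTheory GRing.Theory Num.Theory.
Local Open Scope classical_set_scope.
Local Open Scope ring_scope.

(* The distribution of consumer (and sender) types is a Borel probability
   measure [mu] on R; its cumulative distribution function is [typeCDF mu]. *)
Definition typeCDF {R : realType} (mu : probability R R) (x : R) : R :=
  fine (mu `]-oo, x]%classic).

Section Model.
Variables (R : realType) (mu : probability R R) (qH q1 q2 qL thr : R).
Let F := typeCDF mu.

Definition phi1 : R := 1 - F (thr - 2^-1).
Definition phi2 : R := F (2^-1 - thr).
Definition piB : R := qH + q1 * phi1 + q2 * phi2.
Definition piD : R := 1 - piB.

Definition pBH : R := qH / piB.
Definition pB1 : R := q1 * phi1 / piB.
Definition pB2 : R := q2 * phi2 / piB.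
Definition pDH : R := 0.
Definition pD1 : R := q1 * (1 - phi1) / piD.
Definition pD2 : R := q2 * (1 - phi2) / piD.

Definition UB (i : R) : R := pBH + (2^-1 + i) * pB1 + (2^-1 - i) * pB2.
Definition UD (i : R) : R := pDH + (2^-1 + i) * pD1 + (2^-1 - i) * pD2.
Definition U0 (i : R) : R := qH + (2^-1 + i) * q1 + (2^-1 - i) * q2.

Definition DeltaOB : R := pBH - qH + (pB1 - q1) / 2 + (pB2 - q2) / 2.

Definition Vrec : \bar R :=
  ((piB%:E * \int[mu]_(i in `[(-(2^-1))%R, (2^-1)%R]%classic) (Num.max (UB i - U0 i) 0)%:E)
   + (piD%:E * \int[mu]_(i in `[(-(2^-1))%R, (2^-1)%R]%classic) (Num.max (UD i - U0 i) 0)%:E))%E.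
End Model.

(* Main.v *)
Require Import Defs.
From HB Require Import structures.
From mathcomp Require Import all_boot all_order all_algebra.
From mathcomp Require Import all_classical all_reals all_analysis.
From mathcomp Require Import measurable_realfun.
From mathcomp Require Import ring lra.
Import Order.TTheory GRing.Theory Num.Theory.
Import numFieldNormedType.Exports.
Local Open Scope classical_set_scope.
Local Open Scope ring_scope.

Lemma nnB (R : realFieldType) (qH x y qL b : R) : 0 < qH -> 0 < qL -> 0 <= b -> b <= 1 ->
  0 < x -> 0 < y -> qH + x + y + qL = 1 ->
  0 <= qH / (qH + x * b + y * b) - qH + (x * b / (qH + x * b + y * b) - x).
Proof.
move=> hH hL b0 b1 x0 y0 s.
have p0 : 0 < qH + x * b + y * b.
  have ? : 0 <= x * b by apply: mulr_ge0 => //; lra.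
  have ? : 0 <= y * b by apply: mulr_ge0 => //; lra.
  lra.
have -> : qH / (qH + x * b + y * b) - qH + (x * b / (qH + x * b + y * b) - x)
  = ((1 - b) * qH * (y + qL) + b * (qH + x) * qL) / (qH + x * b + y * b).
  have -> : qL = 1 - qH - x - y by lra.
  by field; rewrite gt_eqF.
apply: divr_ge0; last exact: ltW.
apply: addr_ge0; apply: mulr_ge0; try apply: mulr_ge0; lra.
Qed.

Lemma npD (R : realFieldType) (qH x y qL b : R) : 0 < qH -> 0 < qL -> 0 <= b -> b <= 1 ->
  0 < x -> 0 < y -> qH + x + y + qL = 1 ->
  0 + x * (1 - b) / (1 - (qH + x * b + y * b)) - qH - x <= 0.
Proof.
move=> hH hL b0 b1 x0 y0 s.
have p0 : 0 < 1 - (qH + x * b + y * b).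
  have ? : 0 <= x * (1 - b) by apply: mulr_ge0; lra.
  have ? : 0 <= y * (1 - b) by apply: mulr_ge0; lra.
  lra.
have -> : 0 + x * (1 - b) / (1 - (qH + x * b + y * b)) - qH - x
  = - ((1 - b) * qH * (y + qL) + b * (qH + x) * qL) / (1 - (qH + x * b + y * b)).
  have -> : qL = 1 - qH - x - y by lra.
  by field; rewrite gt_eqF //; lra.
rewrite mulNr oppr_le0.
apply: divr_ge0; last exact: ltW.
apply: addr_ge0; apply: mulr_ge0; try apply: mulr_ge0; lra.
Qed.

Lemma idents (R : realFieldType) (qH q1 q2 qL b : R) : 0 < qH -> 0 < q1 -> 0 < q2 -> 0 < qL ->
  qH + q1 + q2 + qL = 1 -> 0 <= b -> b <= 1 ->
  let pB := qH + q1 * b + q2 * b in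
  let Q := (q1 + q2) / 2 in
  let s := qH / qL in
  let D := qH / pB - qH + (q1 * b / pB - q1) / 2 + (q2 * b / pB - q2) / 2 in
  pB = (1 - 2 * Q) * s / (1 + s) + 2 * Q * b /\
  D = (b * Q * (s + 1) - 2 * Q * s + s) / (2 * b * Q * (s + 1) - 2 * Q * s + s)
    - (1 - 2 * Q) * s / (1 + s) - Q /\
  pB * D = (1 - 2 * Q) * (s + Q * (b - s + s ^+ 2 * (1 - b))) / (s + 1) ^+ 2.
Proof.
move=> hH h1 h2 hL hs b0 b1 pB Q s D.
have p0 : 0 < pB.
  have ? : 0 <= q1 * b by apply: mulr_ge0 => //; lra.
  have ? : 0 <= q2 * b by apply: mulr_ge0 => //; lra.
  rewrite /pB; lra.
have eH : qH = 1 - q1 - q2 - qL by lra.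
have hLn : qL != 0 by rewrite gt_eqF.
have hHL : qH + qL != 0 by rewrite gt_eqF //; lra.
have e1 : pB = (1 - 2 * Q) * s / (1 + s) + 2 * Q * b.
  rewrite /pB /Q /s eH; field.
  rewrite hLn /= gt_eqF //; lra.
have e2 : D = (b * Q * (s + 1) - 2 * Q * s + s) / (2 * b * Q * (s + 1) - 2 * Q * s + s)
    - (1 - 2 * Q) * s / (1 + s) - Q.
  rewrite /D /pB /Q /s eH; field.
  have ? : 0 <= b * (q1 + q2) by apply: mulr_ge0; lra.
  apply/and4P; split; rewrite gt_eqF //; nra.
split => //; split => //.
rewrite /D /pB /Q /s eH; field.
have ? : 0 <= b * (q1 + q2) by apply: mulr_ge0; lra.
apply/and3P; split; rewrite gt_eqF //; nra.
Qed.

Section H.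
Context (R : realType) (mu : probability R R).
Local Notation F := (typeCDF mu).
Local Notation I := (`[-(2^-1), 2^-1]%classic : set R).

Lemma muE x : mu `]-oo, x]%classic = (F x)%:E.
Proof. by rewrite /typeCDF fineK// fin_num_measure. Qed.

Lemma F_ge0 x : 0 <= F x.
Proof. by rewrite /typeCDF fine_ge0. Qed.

Lemma F_le1 x : F x <= 1.
Proof. by rewrite -lee_fin -muE probability_le1. Qed.

Lemma muIc (hI : mu I = 1%E) : mu (~` I) = 0%E.
Proof. by rewrite probability_setC// hI subee. Qed.

Lemma intI (hI : mu I = 1%E) (f : R -> \bar R) : measurable_fun setT f ->
  (\int[mu]_(x in I) f x = \int[mu]_x f x)%E.
Proof.
move=> mf; rewrite -(setUv I) integral_setU//; last first.
- by apply/disj_setPCl.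
- by rewrite setUv.
- exact: measurableC.
rewrite [X in (_ + X)%E]null_set_integral ?adde0//.
- exact: measurableC.
- exact: measurable_funS mf.
exact: muIc.
Qed.

Lemma F_open (a : R) : {for a, continuous F} -> mu `]-oo, a[%classic = (F a)%:E.
Proof.
move=> hc.
have fin : mu `]-oo, a[%classic \is a fin_num by rewrite fin_num_measure.
rewrite -(fineK fin); congr (_%:E).
set m := fine _.
have mle : m <= F a.
  by rewrite -lee_fin /m fineK// -muE le_measure// ?inE//; apply: subset_itvl; rewrite bnd_simp.
apply/eqP; rewrite eq_le mle /=.
apply/ler_addgt0Pr => e e0.
have := hc; move/cvgrPdist_lt => /(_ e e0).
case/nbhs_ballP => d d0 H.
have : ball a d (a - d / 2).
  rewrite /ball /= opprB addrC subrK ger0_norm; last by rewrite divr_ge0// ltW.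
  by rewrite ltr_pdivrMr// ltr_pMr// ltr1n.
move/H => /= h.
have le1 : F (a - d / 2) <= m.
  rewrite -lee_fin /m /typeCDF !fineK ?fin_num_measure// le_measure// ?inE//; apply: subset_itvl.
  by rewrite bnd_simp ltrBlDr ltrDl divr_gt0.
move: h; rewrite ltr_norml => /andP[_ h].
lra.
Qed.

Lemma F_one (hI : mu I = 1%E) r : 2^-1 <= r -> F r = 1.
Proof.
move=> hr; apply/eqP; rewrite eq_le F_le1 -lee_fin -muE -hI le_measure ?inE//.
by move=> x /=; rewrite !in_itv /= => /andP[_ h]; exact: le_trans h hr.
Qed.

Lemma F_zero (hI : mu I = 1%E) r : r < -(2^-1) -> F r = 0.
Proof.
move=> hr; have sub : `]-oo, r]%classic `<=` ~` I.
  move=> x /=; rewrite in_itv /= => xr; apply/negP.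
  by rewrite in_itv /= negb_and -!ltNge (le_lt_trans xr hr).
apply/eqP; rewrite eq_le F_ge0 andbT -lee_fin -muE.
apply: (le_trans (le_measure _ _ _ sub)); rewrite ?inE ?muIc//.
- exact: measurableC.
- by rewrite le_eqVlt; apply/orP; left; apply/eqP; exact: (muIc hI).
Qed.

Lemma F_symm (hI : mu I = 1%E)
  (hs : forall i : R, -(2^-1) <= i <= 2^-1 -> F (- i) = 1 - F i) r :
  F (- r) = 1 - F r.
Proof.
have [hr1|hr1] := leP r (2^-1); last first.
  rewrite (@F_one hI r) ?(@F_zero hI (-r)) ?subrr //; lra.
have [hr2|hr2] := leP (-(2^-1)) r; first by rewrite hs//; apply/andP.
rewrite (@F_zero hI r) ?(@F_one hI (-r)) ?subr0 //; lra.
Qed.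
End H.
Arguments muE {R mu}. Arguments F_ge0 {R mu}. Arguments F_le1 {R mu}. Arguments muIc {R mu}.
Arguments intI {R mu}. Arguments F_open {R mu}. Arguments F_one {R mu}. Arguments F_zero {R mu}. Arguments F_symm {R mu}.

Definition idR (R : realType) : R -> R := idfun.
HB.instance Definition _ (R : realType) :=
  @isMeasurableFun.Build _ _ _ _ (@idR R) (@measurable_id _ _ setT).

Section H2.
Context (R : realType) (mu : probability R R).
Local Notation F := (typeCDF mu).
Local Notation I := (`[-(2^-1), 2^-1]%classic : set R).
Hypothesis hI : mu I = 1%E.
Hypothesis hc : forall x : R, {for x, continuous F}.
Hypothesis hs : forall i : R, -(2^-1) <= i <= 2^-1 -> F (- i) = 1 - F i.

Definition Xid : {RV mu >-> R} := @idR R.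

Definition XN : {RV mu >-> R} := (- Xid)%R.

Lemma cdfX r : cdf Xid r = (F r)%:E.
Proof. by rewrite -muE. Qed.

Lemma ccdfX r : ccdf Xid r = (1 - F r)%:E.
Proof. by rewrite ccdf_1_cdf cdfX. Qed.

Lemma cdfNX r : cdf XN r = (F r)%:E.
Proof.
rewrite /cdf /distribution /pushforward.
have XNE x : XN x = - x by [].
have -> : XN @^-1` `]-oo, r]%classic = ~` `]-oo, - r[%classic.
  apply/seteqP; split => x; rewrite /preimage /setC /mkset XNE !in_itv /= lerNl.
    by move=> h; apply/negP; rewrite -leNgt.
  by move/negP; rewrite -leNgt.
rewrite probability_setC// (F_open (- r) (hc (- r))) (F_symm hI hs r) -EFinB.
by congr (_%:E); lra.
Qed.

Lemma ccdfNX r : ccdf XN r = (1 - F r)%:E.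
Proof. by rewrite ccdf_1_cdf cdfNX. Qed.


Lemma LX : (Xid : R -> R) \in Lfun mu 1.
Proof.
apply/Lfun1_integrable/integrableP; split.
  by apply/measurable_EFinP; exact: (@measurable_id _ _ setT).
rewrite -(intI hI); last first.
  apply: measurableT_comp => //; apply/measurable_EFinP; exact: (@measurable_id _ _ setT).
apply: (@le_lt_trans _ _ (\int[mu]_(x in I) (cst 1%:E) x)%E).
  apply: ge0_le_integral => //.
  - apply: measurableT_comp => //; apply/measurable_EFinP.
    exact: measurable_funS (@measurable_id _ _ setT).
  - move=> x; rewrite /= in_itv /= => /andP[h1 h2]; rewrite lee_fin /Xid /idR /=.
    rewrite ler_norml; apply/andP; split; lra.
by rewrite integral_cst// mul1e (le_lt_trans (probability_le1 _ _)) ?ltry.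
Qed.

Lemma EX0 : ('E_mu[Xid] = 0%:E)%E.
Proof.
have LXN : (- (Xid : R -> R))%R \in Lfun mu 1 by exact: (Lfun_oppr_closed LX).
have e1 := expectation_cdf_ccdf LX.
have e2 := @expectation_cdf_ccdf _ _ _ mu XN LXN.
have eq12 : ('E_mu[XN] = 'E_mu[Xid])%E.
  rewrite e1 e2; congr (_ - _)%E; apply: eq_integral => x _.
    by rewrite ccdfNX ccdfX.
  by rewrite cdfNX cdfX.
have eqN : ('E_mu[XN] = (-1)%:E * 'E_mu[Xid])%E.
  rewrite -expectationZl; last exact: LX.
  by rewrite !expectation_def; apply: eq_integral => x _ /=; rewrite mulrN1.
have fin := expectation_fin_num LX.
move: eq12 eqN fin; case: ('E_mu[Xid])%E => //= e -> /eqP.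
rewrite -EFinM eqe mulN1r => /eqP h _; congr (_%:E); lra.
Qed.
End H2.

Lemma aux0 (R : realType) (D c : R) : (D%:E + c%:E * 0%:E = D%:E)%E.
Proof. by rewrite mule0 adde0. Qed.

Arguments Xid {R mu}.
Arguments XN {R mu}.
Arguments LX {R mu}.
Arguments EX0 {R mu}.

Theorem lemma1 (R : realType) (mu : probability R R) (qH q1 q2 qL thr : R) :
  (* types supported on [-1/2,1/2] *)
  mu (`[-(2^-1), 2^-1]%classic) = 1%E ->
  (* continuous CDF *)
  (forall x : R, {for x, continuous (typeCDF mu)}) ->
  (* full support on [-1/2,1/2] *)
  (forall a b : R, -(2^-1) <= a -> a < b -> b <= 2^-1 -> typeCDF mu a < typeCDF mu b) ->
  (* symmetry *)
  (forall i : R, -(2^-1) <= i <= 2^-1 -> typeCDF mu (- i) = 1 - typeCDF mu i) ->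
  0 < qH -> 0 < q1 -> 0 < q2 -> 0 < qL -> qH + q1 + q2 + qL = 1 ->
  0 < thr < 1 ->
  let beta := typeCDF mu (2^-1 - thr) in
  let Q := (q1 + q2) / 2 in
  let sigma := qH / qL in
  piB mu qH q1 q2 thr = (1 - 2 * Q) * sigma / (1 + sigma) + 2 * Q * beta /\
  DeltaOB mu qH q1 q2 thr =
    (beta * Q * (sigma + 1) - 2 * Q * sigma + sigma)
      / (2 * beta * Q * (sigma + 1) - 2 * Q * sigma + sigma)
    - (1 - 2 * Q) * sigma / (1 + sigma) - Q /\
  Vrec mu qH q1 q2 thr = (piB mu qH q1 q2 thr * DeltaOB mu qH q1 q2 thr)%:E /\
  piB mu qH q1 q2 thr * DeltaOB mu qH q1 q2 thr =
    (1 - 2 * Q) * (sigma + Q * (beta - sigma + sigma ^+ 2 * (1 - beta)))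
      / (sigma + 1) ^+ 2.
Proof.
move=> hI hc hfull hs hH h1 h2 hL hsum /andP[t0 t1] beta Q sigma.
have hb : phi1 mu thr = beta.
  by rewrite /phi1 /beta -(F_symm hI hs) opprB.
have hb2 : phi2 mu thr = beta by [].
have b0 : 0 <= beta := F_ge0 _.
have b1 : beta <= 1 := F_le1 _.
move: (@idents _ _ _ _ _ _ hH h1 h2 hL hsum b0 b1) => /= [e1 [e2 e4]].
have epiB : piB mu qH q1 q2 thr = qH + q1 * beta + q2 * beta by rewrite /piB hb hb2.
have eD : DeltaOB mu qH q1 q2 thr = qH / (qH + q1 * beta + q2 * beta) - qH
   + (q1 * beta / (qH + q1 * beta + q2 * beta) - q1) / 2
   + (q2 * beta / (qH + q1 * beta + q2 * beta) - q2) / 2.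
  by rewrite /DeltaOB /pBH /pB1 /pB2 epiB hb hb2.
split; first by rewrite epiB.
split; first by rewrite eD.
split; last by rewrite epiB eD.
set pB := qH + q1 * beta + q2 * beta in epiB eD e1 e2 e4.
set D := DeltaOB mu qH q1 q2 thr in eD *.
have pBpos : 0 < pB.
  have ? : 0 <= q1 * beta by apply: mulr_ge0 => //; lra.
  have ? : 0 <= q2 * beta by apply: mulr_ge0 => //; lra.
  rewrite /pB; lra.
set c := (q1 * beta / pB - q1) - (q2 * beta / pB - q2).
pose g := (cst D \+ c \o* (@Xid R mu : R -> R))%R.
have Lg : g \in Lfun mu 1.
  apply: (Lfun_addr_closed mu (lexx _)).2; first exact: Lfun_cst.
  by apply: Lfun_scale => //; exact: LX.
have mg : measurable_fun setT g.
  by move: (sub_Lfun_mfun Lg); rewrite inE.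
have nA := @nnB _ qH q1 q2 qL beta hH hL b0 b1 h1 h2 hsum.
have nB : 0 <= qH / pB - qH + (q2 * beta / pB - q2).
  have := @nnB _ qH q2 q1 qL beta hH hL b0 b1 h2 h1 ltac:(by rewrite -hsum (addrAC qH)).
  by rewrite (addrAC qH (q2 * beta)).
have int1 : (\int[mu]_(x in `[(-(2^-1))%R, (2^-1)%R]%classic)
    (Num.max (UB mu qH q1 q2 thr x - U0 qH q1 q2 x) 0)%:E = D%:E)%E.
  transitivity (\int[mu]_(x in `[(-(2^-1))%R, (2^-1)%R]%classic) (g x)%:E)%E.
    apply: eq_integral => x; rewrite inE /= in_itv /= => /andP[xa xb].
    have eU : UB mu qH q1 q2 thr x - U0 qH q1 q2 x = g x.
      rewrite /g /= /Xid /idR /= eD /c /UB /U0 /pBH /pB1 /pB2 epiB hb hb2 /=.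
      by field; rewrite gt_eqF.
    have nU : 0 <= UB mu qH q1 q2 thr x - U0 qH q1 q2 x.
      have -> : UB mu qH q1 q2 thr x - U0 qH q1 q2 x =
        (2^-1 + x) * (qH / pB - qH + (q1 * beta / pB - q1))
        + (2^-1 - x) * (qH / pB - qH + (q2 * beta / pB - q2)).
        rewrite /UB /U0 /pBH /pB1 /pB2 epiB hb hb2 /=.
        by field; rewrite gt_eqF.
      apply: addr_ge0; apply: mulr_ge0; solve [exact: nA | exact: nB | lra].
    by rewrite max_l// eU.
  rewrite (intI hI); last by apply/measurable_EFinP; exact: mg.
  transitivity ('E_mu[g])%E; first by rewrite unlock.
  rewrite /g expectationD; last 2 first.
  - exact: Lfun_cst.
  - by apply: Lfun_scale => //; exact: LX.
  rewrite expectation_cst expectationZl; last exact: LX.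
  by rewrite (EX0 hI hc hs) mule0 adde0.
have pDpos : 0 < 1 - pB.
  have ? : 0 <= q1 * (1 - beta) by apply: mulr_ge0; lra.
  have ? : 0 <= q2 * (1 - beta) by apply: mulr_ge0; lra.
  rewrite /pB; lra.
have nC := @npD _ qH q1 q2 qL beta hH hL b0 b1 h1 h2 hsum.
have nD : 0 + q2 * (1 - beta) / (1 - pB) - qH - q2 <= 0.
  have := @npD _ qH q2 q1 qL beta hH hL b0 b1 h2 h1 ltac:(by rewrite -hsum (addrAC qH)).
  by rewrite (addrAC qH (q2 * beta)).
have int2 : (\int[mu]_(x in `[(-(2^-1))%R, (2^-1)%R]%classic)
    (Num.max (UD mu qH q1 q2 thr x - U0 qH q1 q2 x) 0)%:E = 0)%E.
  transitivity (\int[mu]_(x in `[(-(2^-1))%R, (2^-1)%R]%classic) (cst 0%E) x)%E; last exact: integral0.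
  apply: eq_integral => x; rewrite inE /= in_itv /= => /andP[xa xb].
  have -> : UD mu qH q1 q2 thr x - U0 qH q1 q2 x =
    (2^-1 + x) * (0 + q1 * (1 - beta) / (1 - pB) - qH - q1)
    + (2^-1 - x) * (0 + q2 * (1 - beta) / (1 - pB) - qH - q2).
    rewrite /UD /U0 /pDH /pD1 /pD2 /piD epiB hb hb2 /=.
    by field; rewrite gt_eqF.
  have ? : (2^-1 + x) * (0 + q1 * (1 - beta) / (1 - pB) - qH - q1) <= 0.
    by apply: mulr_ge0_le0; [lra | exact: nC].
  have ? : (2^-1 - x) * (0 + q2 * (1 - beta) / (1 - pB) - qH - q2) <= 0.
    by apply: mulr_ge0_le0; [lra | exact: nD].
  rewrite max_r //; lra.
rewrite /Vrec int1 int2 mule0 adde0 -EFinM.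
by rewrite /piD.
Qed.
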